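(* Let $\mathcal{G}=(\mathcal{V},\mathcal{E})$ be a DAG with treatment $A$ and outcome $Y$ and a linear Gaussian causal model on it as in the context. Let $K\subseteq\mathcal{V}\setminus\{A,Y\}$ be any set of variables (not necessarily a valid adjustment set) and let $P$ be a precision variable in $\mathcal{G}$. Then the bias of the OLS estimator is invariant to adding $P$: $B(\hat\tau_K)=B(\hat\tau_{K\cup P})$.
   Context: $\mathcal{G}=(\mathcal{V},\mathcal{E})$ is a DAG containing treatment $A$ and outcome $Y$ with an edge $A\to Y$; variables follow $V_i=\sum_{V_j\in\mathrm{Pa}(V_i,\mathcal{G})}\beta_{ij}V_j+\epsilon_i$ with jointly independent $\epsilon_i\sim\mathcal{N}(0,\sigma_i^2)$, Markov and faithful to $\mathcal{G}$; no variable of $\mathcal{V}\setminus\{A,Y\}$ is a descendant of $A$. $\tau=\frac{\partial}{\partial a}E\{Y\mid do(A=a)\}$. $\hat\tau_K$ is the OLS coefficient of $A$ when regressing $Y$ on $A$ and $K$, and $B(\hat\tau_K)=E(\hat\tau_K)-\tau$. $\mathcal{G}'$ is $\mathcal{G}$ with $A\to Y$ removed. A precision variable is $V\in\mathcal{V}\setminus\{A,Y\}$ that in $\mathcal{G}'$ is d-separated from $A$ given every $K\subseteq\mathcal{V}\setminus\{A,Y\}$ and d-connected to $Y$ given some $L\subseteq\mathcal{V}\setminus\{A,Y\}$. *)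

(* Defs.v *)
From HB Require Import structures.
From mathcomp Require Import all_boot all_order all_algebra.
From mathcomp Require Import all_classical all_reals all_analysis.
Set Implicit Arguments. Unset Strict Implicit. Unset Printing Implicit Defensive.
Import Order.TTheory GRing.Theory Num.Theory.
Local Open Scope ring_scope.

Section Defs.
Variable n : nat.
Implicit Types (E : rel 'I_n).

(* A DAG on vertex set 'I_n: edge relation E (E u v means u -> v) with no
   directed cycle. *)
Definition acyclic E := forall u v, E u v -> ~~ connect E v u.

Definition adj E (u v : 'I_n) := E u v || E v u.

Definition triple_open E (S : {set 'I_n}) (u w v : 'I_n) : Prop :=
  if E u w && E v w then exists2 d, d \in S & connect E w d
  else w \notin S.

Definition dconnected E (x y : 'I_n) (S : {set 'I_n}) : Prop :=
  exists p : seq 'I_n,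
    [/\ uniq (x :: p), path (adj E) x p, last x p = y &
        forall i, (i.+2 < size (x :: p))%N ->
          triple_open E S (nth x (x :: p) i) (nth x (x :: p) i.+1)
                          (nth x (x :: p) i.+2)].

Definition dseparated E x y S := ~ dconnected E x y S.

Definition remove_edge E (A Y : 'I_n) : rel 'I_n :=
  fun u v => E u v && ~~ ((u == A) && (v == Y)).

Definition precision_var E (A Y P : 'I_n) : Prop :=
  [/\ P != A, P != Y,
      (forall K : {set 'I_n}, A \notin K -> Y \notin K ->
          dseparated (remove_edge E A Y) P A K) &
      (exists L : {set 'I_n}, [/\ A \notin L, Y \notin L &
          dconnected (remove_edge E A Y) P Y L])].

Variable R : realType.

(* Linear SEM  V = Bm V + eps, Bm i j = beta_{ij} (coefficient of V_j in the
   equation of V_i), eps ~ N(0, diag sigma2) independent.  Covariance: *)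
Definition sem_cov (Bm : 'M[R]_n) (sigma2 : 'rV[R]_n) : 'M[R]_n :=
  invmx (1%:M - Bm) *m diag_mx sigma2 *m (invmx (1%:M - Bm))^T.

(* partial covariance of x and y given S (Gaussian: zero iff x _||_ y | S) *)
Definition pcov (Sig : 'M[R]_n) (x y : 'I_n) (S : {set 'I_n}) : R :=
  let s := enum S in
  let m := size s in
  let SSS := \matrix_(i < m, j < m) Sig (nth x s i) (nth x s j) in
  let SxS := \row_(j < m) Sig x (nth x s j) in
  let SSy := \col_(i < m) Sig (nth x s i) y in
  Sig x y - (SxS *m invmx SSS *m SSy) ord0 ord0.

Definition markov_faithful E (Sig : 'M[R]_n) : Prop :=
  forall (x y : 'I_n) (S : {set 'I_n}), x != y -> x \notin S -> y \notin S ->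
    (dseparated E x y S <-> pcov Sig x y S = 0).

(* E(tau_hat_K): expectation of the OLS coefficient of A in the regression of
   Y on (A, K); for the zero-mean jointly Gaussian model this equals the
   population least-squares coefficient  [Sigma_XX^{-1} Sigma_XY]_A,
   X = (A, K). *)
Definition ols_coef (Sig : 'M[R]_n) (A Y : 'I_n) (K : {set 'I_n}) : R :=
  let s := A :: enum K in
  let m := (size (enum K)).+1 in
  let SXX := \matrix_(i < m, j < m) Sig (nth A s i) (nth A s j) in
  let SXY := \col_(i < m) Sig (nth A s i) Y in
  (invmx SXX *m SXY) ord0 ord0.

(* Interventional mean E{V | do(A = a)}: the equation for A is replaced by
   A := a; the noises have mean zero. *)
Definition do_mean (Bm : 'M[R]_n) (A : 'I_n) (a : R) : 'cV[R]_n :=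
  let Bdo := \matrix_(i, j) (if i == A then 0 else Bm i j) in
  invmx (1%:M - Bdo) *m (\col_i (if i == A then a else 0)).

(* tau = d/da E{Y | do(A = a)}  (affine in a, so evaluated at a = 0) *)
Definition causal_effect (Bm : 'M[R]_n) (A Y : 'I_n) : R :=
  derive1 (fun a : R => do_mean Bm A a Y ord0) 0.

Definition ols_bias (Bm : 'M[R]_n) (sigma2 : 'rV[R]_n) (A Y : 'I_n)
  (K : {set 'I_n}) : R :=
  ols_coef (sem_cov Bm sigma2) A Y K - causal_effect Bm A Y.

End Defs.

(* Main.v *)
Require Import Defs.
From HB Require Import structures.
From mathcomp Require Import all_boot all_order all_algebra.
From mathcomp Require Import all_classical all_reals all_analysis.
From mathcomp Require Import lra.
From mathcomp Require Import lra.
Import Order.TTheory GRing.Theory Num.Theory.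
Local Open Scope ring_scope.
Section Lin.
Variable R : realType.
Variable n : nat.

Definition Sel (s : seq 'I_n) (x0 : 'I_n) : 'M[R]_(size s, n) :=
  \matrix_(k, j) (nth x0 s k == j)%:R.

Lemma Sel_mulE s x0 m (M : 'M[R]_(n, m)) k i :
  (Sel s x0 *m M) k i = M (nth x0 s k) i.
Proof.
have -> : (Sel s x0 *m M) k i = (row k (Sel s x0 *m M)) 0 i by rewrite /row mxE.
rewrite row_mul.
have -> : row k (Sel s x0) = delta_mx 0 (nth x0 s k).
  by apply/rowP => j; rewrite /row !mxE eqxx eq_sym.
by rewrite -rowE /row mxE.
Qed.

Lemma mul_SelTE s x0 m (M : 'M[R]_(m, n)) k i :
  (M *m (Sel s x0)^T) k i = M k (nth x0 s i).
Proof.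
have -> : (M *m (Sel s x0)^T) k i = (col i (M *m (Sel s x0)^T)) k 0 by rewrite /col mxE.
have -> : col i (M *m (Sel s x0)^T) = M *m col i (Sel s x0)^T.
  by apply/colP => j; rewrite !mxE; apply: eq_bigr => l _; rewrite !mxE.
have -> : col i (Sel s x0)^T = delta_mx (nth x0 s i) 0.
  by apply/colP => j; rewrite /col !mxE eqxx andbT eq_sym.
by rewrite -colE /col mxE.
Qed.

Lemma SelSelT s x0 : uniq s -> Sel s x0 *m (Sel s x0)^T = 1%:M.
Proof.
move=> u; apply/matrixP => k l; rewrite mul_SelTE !mxE.
by rewrite nth_uniq.
Qed.

Variable S : 'M[R]_n.
Hypothesis Ssym : forall i j, S i j = S j i.
Hypothesis SPD : forall x : 'rV[R]_n, x != 0 -> 0 < (x *m S *m x^T) 0 0.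

Lemma SXX_eq s x0 :
  \matrix_(i < size s, j < size s) S (nth x0 s i) (nth x0 s j)
  = Sel s x0 *m S *m (Sel s x0)^T.
Proof. by apply/matrixP => k l; rewrite mul_SelTE Sel_mulE mxE. Qed.

Lemma SXX_unit s x0 : uniq s ->
  \matrix_(i < size s, j < size s) S (nth x0 s i) (nth x0 s j) \in unitmx.
Proof.
move=> u; rewrite SXX_eq unitmxE unitfE; apply/negP => /det0P [v vnz vS0].
have vSnz : v *m Sel s x0 != 0.
  apply: contra vnz => /eqP h.
  by rewrite -[v]mulmx1 -(SelSelT s x0 u) mulmxA h mul0mx.
have := SPD _ vSnz.
have -> : v *m Sel s x0 *m S *m (v *m Sel s x0)^T
   = v *m (Sel s x0 *m S *m (Sel s x0)^T) *m v^T by rewrite trmx_mul !mulmxA.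
by rewrite vS0 !mul0mx mxE ltxx.
Qed.

Definition solb s x0 y :=
  (invmx (\matrix_(i < size s, j < size s) S (nth x0 s i) (nth x0 s j))
     *m \col_(i < size s) S (nth x0 s i) y)^T *m Sel s x0.

Lemma solve s x0 y (u : uniq s) :
  [/\ forall j, j \notin s -> solb s x0 y 0 j = 0,
      forall k : 'I_(size s), solb s x0 y 0 (nth x0 s k) =
        (invmx (\matrix_(i < size s, j < size s) S (nth x0 s i) (nth x0 s j))
          *m \col_(i < size s) S (nth x0 s i) y) k 0 &
      forall i, i \in s -> (solb s x0 y *m S) 0 i = S i y].
Proof.
set SXX := \matrix_(i < size s, j < size s) S (nth x0 s i) (nth x0 s j).
set SXY := \col_(i < size s) S (nth x0 s i) y.
set b := solb s x0 y.
have -> : b = (invmx SXX *m SXY)^T *m Sel s x0 by [].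
split.
- move=> j js; rewrite /b mxE big1 // => k _; rewrite !mxE.
  have : nth x0 s k \in s by rewrite mem_nth.
  by case: eqP => [->|]; [rewrite (negbTE js)| rewrite mulr0].
- move=> k; rewrite -mul_SelTE /b -mulmxA SelSelT // mulmx1 mxE //.
- move=> i iin; have ii : (index i s < size s)%N by rewrite index_mem.
  rewrite -(nth_index x0 iin) -[index i s]/(nat_of_ord (Ordinal ii)).
  rewrite -mul_SelTE /b.
  have -> : (invmx SXX *m SXY)^T *m Sel s x0 *m S *m (Sel s x0)^T
     = (invmx SXX *m SXY)^T *m SXX by rewrite /SXX SXX_eq !mulmxA.
  have SXXT : SXX^T = SXX by apply/matrixP => k l; rewrite !mxE Ssym.
  rewrite -[SXX in _^T *m SXX]SXXT -trmx_mul mulmxA mulmxV ?mul1mx.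
    by rewrite !mxE.
  exact: SXX_unit.
Qed.

Lemma pcov_eq x y (K : {set 'I_n}) :
  pcov S x y K = S x y - (solb (enum K) x y *m S) 0 x.
Proof.
rewrite /pcov /solb -mulmxA; congr (_ - _).
rewrite -mulmxA !mxE; apply: eq_bigr => k _.
by rewrite Sel_mulE !mxE Ssym mulrC.
Qed.

Lemma key (sK T : seq 'I_n) (A Y : 'I_n) (r c : 'rV[R]_n) :
  (forall j, j \notin sK -> r 0 j = 0) ->
  (forall j, j \notin T -> c 0 j = 0) ->
  (forall i, i \in T -> (c *m S) 0 i = S i Y) ->
  {subset sK <= T} ->
  (forall i, i \in T -> i != A -> (r *m S) 0 i = 0) ->
  c 0 A * (r *m S) 0 A = \sum_j r 0 j * S j Y.
Proof.
move=> r0 c0 cS sub rS.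
have SrT : forall i, (S *m r^T) i 0 = (r *m S) 0 i.
  by move=> i; rewrite !mxE; apply: eq_bigr => j _; rewrite !mxE Ssym mulrC.
have e1 : (c *m S *m r^T) 0 0 = c 0 A * (r *m S) 0 A.
  rewrite -mulmxA mxE (bigD1 A) //= SrT big1 ?addr0 // => i iA.
  case: (boolP (i \in T)) => iT; last by rewrite c0 // mul0r.
  by rewrite SrT (rS i iT iA) mulr0.
rewrite -e1 mxE; apply: eq_bigr => j _; rewrite [r^T _ _]mxE mulrC.
case: (boolP (j \in sK)) => js; last by rewrite r0 // !mul0r.
by rewrite cS //; apply: sub.
Qed.

Lemma ols_eq A Y (K : {set 'I_n}) : A \notin K ->
  ols_coef S A Y K = solb (A :: enum K) A Y 0 A.
Proof.
move=> AK; have u : uniq (A :: enum K) by rewrite /= mem_enum AK enum_uniq.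
have [_ h _] := solve (A :: enum K) A Y u.
by rewrite (h ord0).
Qed.

End Lin.
Section Sem.
Variable R : realType.
Variable n : nat.
Variable E : rel 'I_n.
Variable Bm : 'M[R]_n.
Variable sigma2 : 'rV[R]_n.
Hypothesis acyc : acyclic E.
Hypothesis Bsupp : forall i j, ~~ E j i -> Bm i j = 0.
Hypothesis spos : forall i, 0 < sigma2 ord0 i.

Lemma IB_unit : (1%:M - Bm) \in unitmx.
Proof.
rewrite unitmxE unitfE; apply/negP => /det0P [v vnz].
rewrite mulmxBr mulmx1 => /eqP; rewrite subr_eq0 => /eqP vB.
have H : forall N j, (#|[set i | connect E j i]| <= N)%N -> v 0 j = 0.
  elim=> [|N IH] j hN.
    have h : (0 < #|[set i | connect E j i]|)%N.
      by apply/card_gt0P; exists j; rewrite inE connect0.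
    by have := leq_trans h hN.
  rewrite {1}vB mxE big1 // => i _.
  case: (boolP (E j i)) => Eji; last by rewrite Bsupp // mulr0.
  rewrite IH ?mul0r //.
  have : [set k | connect E i k] \proper [set k | connect E j k].
    apply/properP; split.
      apply/fintype.subsetP => k; rewrite !inE => cik.
      exact: connect_trans (connect1 Eji) cik.
    exists j; first by rewrite inE connect0.
    by rewrite inE; apply: acyc.
  move/proper_card => lt; rewrite -ltnS; exact: leq_trans lt hN.
apply/negP: vnz; rewrite negbK; apply/eqP/rowP => j.
by rewrite (H #|[set i | connect E j i]|) // mxE.
Qed.

Lemma sem_sym i j : sem_cov Bm sigma2 i j = sem_cov Bm sigma2 j i.
Proof.
have h : (sem_cov Bm sigma2)^T = sem_cov Bm sigma2.
  by rewrite /sem_cov !trmx_mul trmxK tr_diag_mx mulmxA.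
by rewrite -{1}h mxE.
Qed.

Lemma sem_PD (x : 'rV[R]_n) : x != 0 ->
  0 < (x *m sem_cov Bm sigma2 *m x^T) 0 0.
Proof.
move=> xnz.
set M := invmx (1%:M - Bm).
have Mu : M \in unitmx by rewrite unitmx_inv IB_unit.
set u := x *m M.
have unz : u != 0.
  apply: contra xnz => /eqP u0.
  by rewrite -(mulmxK Mu x) -/u u0 mul0mx.
have -> : x *m sem_cov Bm sigma2 *m x^T = u *m diag_mx sigma2 *m u^T.
  by rewrite /sem_cov /u trmx_mul !mulmxA.
have [i ui] : exists i, u 0 i != 0.
  apply/existsP; apply: contraNT unz => /existsPn h.
  by apply/eqP/rowP => k; move: (h k); rewrite negbK => /eqP ->; rewrite mxE.
clearbody u.
rewrite mul_mx_diag mxE (bigD1 i) //=.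
have t1 : 0 < u 0 i ^+ 2 by rewrite exprn_even_gt0 // ui orbT.
set t := \sum_(k | _) _.
have t2 : 0 <= t.
  apply: sumr_ge0 => k _; rewrite !mxE.
  have := sqr_ge0 (u 0 k); have := spos k; rewrite expr2; nra.
rewrite !mxE.
have := spos i; move: t1 t2; rewrite expr2; nra.
Qed.

End Sem.
Lemma graph_dconn n (E : rel 'I_n) (A Y P : 'I_n) (K : {set 'I_n}) :
  E A Y -> (forall v, v != A -> v != Y -> ~~ connect E A v) ->
  A \notin K -> Y \notin K -> P != Y ->
  dconnected E P A K -> dconnected (remove_edge E A Y) P A K.
Proof.
move=> EAY desc AK YK PY [p [u pth lst tr]].
have nthA : nth P (P :: p) (size p) = A.
  by have := nth_last P (P :: p); rewrite /= lst.
have notA : forall j, (j < size p)%N -> nth P (P :: p) j != A.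
  move=> j jl; rewrite -nthA nth_uniq //=; first by rewrite ltn_eqF.
  by apply: (leq_trans jl).
have inKA : forall d, d \in K -> ~~ connect E A d.
  move=> d dK; apply: desc.
    by apply/eqP => dA; rewrite -dA dK in AK.
  by apply/eqP => dY; rewrite -dY dK in YK.
have F2 : forall w d, d \in K -> connect E w d -> connect (remove_edge E A Y) w d.
  move=> w d dK /connectP [s ps ls].
  have nAd := inKA d dK.
  elim: s w ps ls => [|a s IH] w /=; first by move=> _ ->; exact: connect0.
  move=> /andP [Ewa ps] ls; apply: connect_trans (IH a ps ls).
  apply: connect1; rewrite /remove_edge Ewa /=.
  apply/negP => /andP [/eqP wA /eqP aY]; apply: (negP nAd).
  apply/connectP; exists (a :: s) => //=; rewrite -wA Ewa ps //.
have tri_hyp := tr.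
move/(pathP P): pth => pth.
exists p; split => //.
- apply/(pathP P) => i ip.
  have uA := notA i ip.
  rewrite /adj /remove_edge (negbTE uA) /= andbT.
  case Euv: (E _ _) => //=.
  have := pth i ip; rewrite /adj Euv /= => Evu; rewrite Evu /=.
  apply/negP => /andP [/eqP vA /eqP uY].
  case: i ip uA Euv Evu vA uY => [|i] ip uA Euv Evu vA uY.
    by move: PY; rewrite -uY eqxx.
  have hi : (i.+2 < size (P :: p))%N by rewrite /=; apply: ip.
  have := tr i hi.
  rewrite /triple_open.
  have -> : nth P (P :: p) i.+2 = A by rewrite -vA.
  have -> : nth P (P :: p) i.+1 = Y by rewrite -uY.
  rewrite EAY andbT; case: ifP => [_ [d dK cYd]|EwY _].
    by apply: (negP (inKA d dK)); apply: connect_trans (connect1 EAY) cYd.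
  have ip' : (i < size p)%N by apply: ltnW.
  have := pth i ip'; rewrite /adj.
  have -> : nth P p i = Y by rewrite -uY.
  rewrite EwY /= => EYw.
  have wA := notA i ip'.
  have wY : nth P (P :: p) i != Y.
    rewrite -uY nth_uniq //=; first by rewrite (ltn_eqF (ltnSn i)).
    by apply: ltnW; apply: ltnW.
  by apply: (negP (desc _ wA wY)); apply: connect_trans (connect1 EAY) (connect1 EYw).
- move=> i hi; have := tr i hi.
  have ip : (i < size p)%N by apply: ltnW; apply: hi.
  have ip1 : (i.+1 < size p)%N by apply: hi.
  have uA := notA i ip.
  rewrite /triple_open /remove_edge (negbTE uA) /= andbT.
  case vw: ((nth P p i.+1 == A) && (nth P p i == Y)).
    move=> _; move/andP: vw => [_ /eqP wY]; rewrite wY; case: ifP => //; by rewrite /= !andbF.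
  rewrite andbT; case: ifP => // _ [d dK c].
  by exists d => //; apply: F2.
Qed.

Lemma mxsubE (R : realType) m k (M N : 'M[R]_(m, k)) i j :
  (M - N) i j = M i j - N i j.
Proof. by rewrite !mxE. Qed.

Theorem lemmaB7 (R : realType) (n : nat) (E : rel 'I_n)
    (Bm : 'M[R]_n) (sigma2 : 'rV[R]_n) (A Y P : 'I_n) (K : {set 'I_n}) :
  acyclic E ->
  E A Y ->
  (forall i j, ~~ E j i -> Bm i j = 0) ->
  (forall i, 0 < sigma2 ord0 i) ->
  markov_faithful E (sem_cov Bm sigma2) ->
  (forall v, v != A -> v != Y -> ~~ connect E A v) ->
  A \notin K -> Y \notin K ->
  precision_var E A Y P ->
  ols_bias Bm sigma2 A Y K = ols_bias Bm sigma2 A Y (K :|: [set P]).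
Proof.
move=> acyc EAY Bsupp spos mf desc AK YK [PA PY sepG' _].
rewrite /ols_bias; congr (_ - _).
case: (boolP (P \in K)) => PK.
  by have -> : K :|: [set P] = K by apply/finset.setUidPl; rewrite finset.sub1set.
set S := sem_cov Bm sigma2.
have SPD := @sem_PD R n E Bm sigma2 acyc Bsupp spos.
have Ssym : forall i j, S i j = S j i := @sem_sym R n Bm sigma2.
have dsep : dseparated E P A K.
  move=> dc; apply: (sepG' K AK YK); exact: graph_dconn.
have pc : pcov S P A K = 0 by apply/(mf P A K PA PK AK).
have AKP : A \notin K :|: [set P].
  by rewrite !inE negb_or AK eq_sym PA.
rewrite (ols_eq _ _ _ Ssym SPD _ _ _ AK) (ols_eq _ _ _ Ssym SPD _ _ _ AKP).
set sK := A :: enum K.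
set sK' := A :: enum (K :|: [set P]).
have usK : uniq sK by rewrite /= mem_enum AK enum_uniq.
have usK' : uniq sK' by rewrite /= mem_enum AKP enum_uniq.
have ueK : uniq (enum K) := enum_uniq _.
have [g0 _ gS] := solve _ _ _ Ssym SPD (enum K) P A ueK.
have [b0 _ bS] := solve _ _ _ Ssym SPD sK A Y usK.
have [b0' _ bS'] := solve _ _ _ Ssym SPD sK' A Y usK'.
set g := solb R n S (enum K) P A.
set r := delta_mx 0 A - g.
have gA : g 0 A = 0 by apply: g0; rewrite mem_enum.
have rSi : forall i, i \in K :|: [set P] -> (r *m S) 0 i = 0.
  move=> i; rewrite /r mulmxBl -rowE mxsubE [row _ _ _ _]mxE.
  rewrite !inE => /orP [iK|/eqP ->].
    by rewrite gS ?mem_enum // Ssym subrr.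
  by move: pc; rewrite (pcov_eq _ _ _ Ssym) Ssym.
have r0 : forall j, j \notin sK -> r 0 j = 0.
  move=> j; rewrite !inE negb_or => /andP [jA jK].
  by rewrite /r mxsubE mxE (negbTE jA) /= g0 ?subrr // mem_enum.
have rS1 : forall i, i \in sK -> i != A -> (r *m S) 0 i = 0.
  move=> i; rewrite in_cons => /orP [/eqP->|]; first by rewrite eqxx.
  rewrite mem_enum => iK _; apply: rSi; by rewrite !inE iK.
have rS2 : forall i, i \in sK' -> i != A -> (r *m S) 0 i = 0.
  move=> i; rewrite in_cons => /orP [/eqP->|]; first by rewrite eqxx.
  rewrite mem_enum => iK _; exact: rSi.
have sub : {subset sK <= sK'}.
  move=> i; rewrite /sK /sK' !in_cons !mem_enum !inE => /orP [->|->] //.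
  by rewrite orbT.
have k1 := key _ _ _ Ssym sK sK A Y r _ r0 b0 bS (fun x h => h) rS1.
have k2 := key _ _ _ Ssym sK sK' A Y r _ r0 b0' bS' sub rS2.
have rA : r 0 A = 1.
  by rewrite /r mxsubE mxE !eqxx gA subr0.
have rnz : r != 0.
  apply/eqP => h; move: rA; rewrite h mxE => /esym/eqP; by rewrite oner_eq0.
have rSA : (r *m S *m r^T) 0 0 = (r *m S) 0 A.
  rewrite mxE (bigD1 A) //= big1 ?addr0; first by rewrite [r^T _ _]mxE rA mulr1.
  move=> i iA; case: (boolP (i \in sK)) => iK; first by rewrite rS1 // mul0r.
  by rewrite [r^T _ _]mxE r0 // mulr0.
have pos := SPD r rnz.
have nz : (r *m S) 0 A != 0 by rewrite -rSA gt_eqF.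
apply: (mulIf nz).
by rewrite k1 k2.
Qed.
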